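(* Let $B\to K\leftarrow C$ be ring homomorphisms with $C\to K$ surjective, $A=B\times_K C$, and $X=\mathrm{Spec}\,A$, $Y=\mathrm{Spec}\,B$, $Z=\mathrm{Spec}\,C$, $T=\mathrm{Spec}\,K$, with the induced morphisms ($Y\to X$ is the closed immersion defined by the kernel of $A\to B$, $T\to Z$ the closed immersion). Let $R$ be a valuation ring which is not a field, $S=\mathrm{Spec}\,R$ with closed point $s$, and $f:S\to X$ a morphism with $f^{-1}(Y)=\{s\}$. Then $f$ admits a unique lifting $g:S\to Z$ (i.e., $f$ is the composition of $g$ with $Z\to X$), and this lifting satisfies $g^{-1}(T)=\{s\}$. *)

(* Defs.v *)
(* Affine schemes are encoded through rings: a morphism
   Spec R -> Spec A is a ring morphism A -> R, a point of Spec R is a prime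
   ideal of R. *)
From HB Require Import structures.
From mathcomp Require Import all_boot all_order all_algebra.
Set Implicit Arguments. Unset Strict Implicit. Unset Printing Implicit Defensive.
Import Order.TTheory GRing.Theory Num.Theory.
Local Open Scope ring_scope.

Definition is_prime_ideal (R : comPzRingType) (P : R -> Prop) : Prop :=
  [/\ P 0,
      (forall x y, P x -> P y -> P (x + y)),
      (forall r x, P x -> P (r * x)),
      ~ P 1 &
      (forall x y, P (x * y) -> P x \/ P y)].

Definition is_valuation_ring (R : idomainType) : Prop :=
  forall x : {fraction R}, x != 0 ->
    (exists a : R, x = tofrac a) \/ (exists a : R, x^-1 = tofrac a).

Definition not_a_field (R : idomainType) : Prop :=
  exists x : R, x != 0 /\ x \notin GRing.unit.

Definition is_fibre_product (A B C K : comPzRingType)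
  (beta : {rmorphism B -> K}) (gamma : {rmorphism C -> K})
  (pB : {rmorphism A -> B}) (pC : {rmorphism A -> C}) : Prop :=
  [/\ (forall a, beta (pB a) = gamma (pC a)),
      (forall a a', pB a = pB a' -> pC a = pC a' -> a = a') &
      (forall b c, beta b = gamma c -> exists a, pB a = b /\ pC a = c)].

(* Preimage, under Spec(phi) : Spec R -> Spec A, of the closed subscheme
   V(ker p) of Spec A (p : A -> B), is the set of primes Q of R with
   ker p ⊆ phi^-1(Q).  "preimage_is_closed_point" says this set is exactly
   the closed point {m}, m = the maximal ideal (= non-units) of the local
   ring R. *)
Definition preimage_is_closed_point (A B : comPzRingType) (R : idomainType)
  (p : {rmorphism A -> B}) (phi : {rmorphism A -> R}) : Prop :=
  forall Q : R -> Prop, is_prime_ideal Q ->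
    ((forall a, p a = 0 -> Q (phi a)) <->
     (forall x, Q x <-> x \notin GRing.unit)).

(* Main.v *)
Require Import Defs.
From HB Require Import structures.
From mathcomp Require Import all_boot all_order all_algebra.
From Stdlib Require Import Classical ClassicalEpsilon.
From mathcomp Require Import ring.
Import Order.TTheory GRing.Theory Num.Theory.
Local Open Scope ring_scope.

Section MkR.
Variables (C R : comPzRingType) (g : C -> R) (h0 : g 0 = 0)
 (hD : {morph g : x y / x + y}) (h1 : g 1 = 1) (hM : {morph g : x y / x * y}).
Definition gw := g.
HB.instance Definition _ := GRing.isNmodMorphism.Build C R gw (h0, hD).
HB.instance Definition _ := GRing.isMonoidMorphism.Build C R gw (h1, hM).
Lemma mk_rmorph : exists gm : {rmorphism C -> R}, forall c, gm c = g c.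
Proof. by exists gw. Qed.
End MkR.

Lemma dichot (R : idomainType) (hval : is_valuation_ring R) (u v : R) :
  (exists a, u = a * v) \/ (exists a, v = a * u).
Proof.
have [->|v0] := eqVneq v 0; first by right; exists 0; rewrite mul0r.
have [->|u0] := eqVneq u 0; first by left; exists 0; rewrite mul0r.
have x0 : (tofrac u) / (tofrac v) != 0.
  by rewrite mulf_eq0 invr_eq0 !tofrac_eq0 negb_or u0 v0.
have vF : tofrac v != 0 by rewrite tofrac_eq0.
have uF : tofrac u != 0 by rewrite tofrac_eq0.
case: (hval _ x0) => [[a ha]|[a ha]].
  left; exists a; apply/eqP; rewrite -tofrac_eq rmorphM /= -ha mulfVK //.
right; exists a; apply/eqP; rewrite -tofrac_eq rmorphM /= -ha invfM invrK.
by rewrite mulrAC mulVf // mul1r.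
Qed.
Arguments dichot {R}.

Theorem lemma3p3p4 (A B C K : comPzRingType)
  (beta : {rmorphism B -> K}) (gamma : {rmorphism C -> K})
  (gamma_surj : forall k : K, exists c : C, gamma c = k)
  (pB : {rmorphism A -> B}) (pC : {rmorphism A -> C})
  (hA : is_fibre_product beta gamma pB pC)
  (R : idomainType) (hval : is_valuation_ring R) (hnf : not_a_field R)
  (f : {rmorphism A -> R})
  (hf : preimage_is_closed_point pB f) :
  exists g : {rmorphism C -> R},
    [/\ (forall a, g (pC a) = f a),
        (forall g' : {rmorphism C -> R},
            (forall a, g' (pC a) = f a) -> forall c, g' c = g c) &
        preimage_is_closed_point gamma g].
Proof.
move: (hA) => [hcomm hinj hsurj].
have unitE (x : R) : (exists y, x * y = 1) -> x \is a GRing.unit.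
  by move=> H; apply/unitrPr.
have [a0 [ha0 ht]] : exists a0, pB a0 = 0 /\ f a0 != 0.
  apply: NNPP => H.
  have zp : is_prime_ideal (fun y : R => y = 0).
    split=> //.
    - by move=> x y -> ->; rewrite addr0.
    - by move=> r x ->; rewrite mulr0.
    - by move/eqP; rewrite oner_eq0.
    - by move=> x y /eqP; rewrite mulf_eq0 => /orP [/eqP|/eqP]; auto.
  have Hz : forall a, pB a = 0 -> f a = 0.
    move=> a ha.
    case: (f a =P 0) => // ne; exfalso; apply: H; exists a; split=> //; exact/eqP.
  have Hall := (hf _ zp).1 Hz.
  case: hnf => x [x0 xu].
  by rewrite ((Hall x).2 xu) eqxx in x0.
set t := f a0.
have hex' c a1 : pB a1 = 0 -> exists a, pB a = 0 /\ pC a = c * pC a1.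
  by move=> h1; apply: hsurj; rewrite rmorph0 rmorphM /= -hcomm h1 !rmorph0 mulr0.
have hex c : exists a, pB a = 0 /\ pC a = c * pC a0 := hex' c a0 ha0.
have hmul x y z w : pB x = 0 -> pB z = 0 -> pC x * pC y = pC z * pC w ->
    f x * f y = f z * f w.
  move=> hx hz e; rewrite -!rmorphM; congr (f _); apply: hinj.
    by rewrite !rmorphM /= hx hz !mul0r.
  by rewrite !rmorphM.
have t0 : t != 0 by [].
have hdiv c a : pB a = 0 -> pC a = c * pC a0 -> exists r, f a = r * t.
  move=> ha hca; set x := f a.
  case: (dichot hval x t) => // [[r hr]].
  have [ru|rnu] := boolP (r \is a GRing.unit).
    by exists r^-1; rewrite hr mulKr.
  exfalso.
  have x0 : x != 0 by apply: contraNneq t0 => x0; rewrite hr x0 mulr0.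
  have r0 : r != 0 by apply: contraNneq t0 => r0; rewrite hr r0 mul0r.
  have step a1 : pB a1 = 0 -> exists a2, pB a2 = 0 /\ f a1 = r * f a2.
    move=> h1; have [a2 [h2 e2]] := hex' c a1 h1.
    exists a2; split=> //.
    have eC : pC a2 * pC a0 = pC a1 * pC a.
      by rewrite e2 hca mulrCA mulrA.
    have := hmul a2 a0 a1 a h2 h1 eC.
    rewrite -/t -/x hr mulrA => /(mulIf x0) <-; by rewrite mulrC.
  have iter k a1 : pB a1 = 0 -> exists z, f a1 = r ^+ k * z.
    elim: k a1 => [|k IH] a1 h1; first by exists (f a1); rewrite mul1r.
    have [a2 [h2 ->]] := step a1 h1; have [z ->] := IH a2 h2.
    by exists z; rewrite exprS mulrA.
  pose P := fun y : R => forall k : nat, exists z, y = r ^+ k * z.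
  have Pp : is_prime_ideal P.
    split.
    - by move=> k; exists 0; rewrite mulr0.
    - move=> y z Py Pz k; have [u ->] := Py k; have [v ->] := Pz k.
      by exists (u + v); rewrite mulrDr.
    - move=> y z Pz k; have [v ->] := Pz k.
      by exists (y * v); rewrite mulrCA.
    - move=> P1; have [z hz] := P1 1%N; move/negP: rnu; apply; apply: unitE.
      by exists z; rewrite -hz.
    - move=> y z Pyz.
      case: (classic (P y)) => Py; first by left.
      case: (classic (P z)) => Pz; first by right.
      exfalso.
      have [i Hi] := not_all_ex_not _ _ Py.
      have [j Hj] := not_all_ex_not _ _ Pz.
      have [[w hw]|[w hw]] := dichot hval y (r ^+ i).
        by apply: Hi; exists w; rewrite mulrC.
      have [[w' hw']|[w' hw']] := dichot hval z (r ^+ j).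
        by apply: Hj; exists w'; rewrite mulrC.
      have [s hs] := Pyz (i + j).+1.
      have e : r ^+ (i + j) * 1 = r ^+ (i + j) * (r * (w * w' * s)).
        transitivity ((w * y) * (w' * z)); first by rewrite mulr1 exprD -hw -hw'.
        rewrite mulrACA hs exprSr; ring.
      move/(mulfI (expf_neq0 _ r0)): e => e.
      move/negP: rnu; apply; apply: unitE; exists (w * w' * s); by rewrite -e.
  have hP : forall a, pB a = 0 -> P (f a) by move=> a1 h1 k; exact: iter.
  have Pr := ((hf _ Pp).1 hP r).2 rnu.
  have [z hz] := Pr 2%N.
  move/negP: rnu; apply; apply: unitE; exists z.
  apply: (mulfI r0); by rewrite mulr1 mulrA -expr2 -hz.
have [ac acP] : exists ac : C -> A, forall c, pB (ac c) = 0 /\ pC (ac c) = c * pC a0.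
  exists (fun c => proj1_sig (constructive_indefinite_description _ (hex c))) => c.
  exact: proj2_sig (constructive_indefinite_description _ (hex c)).
have hdiv' c : exists r, f (ac c) = r * t by have [h1 h2] := acP c; exact: hdiv h1 h2.
have [gf gP] : exists gf : C -> R, forall c, f (ac c) = gf c * t.
  exists (fun c => proj1_sig (constructive_indefinite_description _ (hdiv' c))) => c.
  exact: proj2_sig (constructive_indefinite_description _ (hdiv' c)).
have gspec c a : pB a = 0 -> pC a = c * pC a0 -> f a = gf c * t.
  move=> h1 h2; have [h3 h4] := acP c.
  by rewrite (hinj a (ac c)) ?gP // ?h1 ?h3 // h2 h4.
have g0 : gf 0 = 0.
  apply: (mulIf t0); rewrite mul0r -(gspec 0 0) ?rmorph0 ?mul0r //.
have gD : {morph gf : x y / x + y}.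
  move=> x y; apply: (mulIf t0).
  rewrite mulrDl -[gf x * t]gP -[gf y * t]gP -rmorphD; symmetry.
  have [h1 h2] := acP x; have [h3 h4] := acP y.
  by apply: gspec; rewrite rmorphD /= ?h1 ?h3 ?addr0 // h2 h4 mulrDl.
have g1 : gf 1 = 1.
  by apply: (mulIf t0); rewrite mul1r -(gspec 1 a0) ?mul1r.
have gM : {morph gf : x y / x * y}.
  move=> x y; apply: (mulIf t0); apply: (mulIf t0).
  have -> : gf x * gf y * t * t = (gf x * t) * (gf y * t) by ring.
  rewrite -[gf (x * y) * t]gP -[gf x * t]gP -[gf y * t]gP.
  have [h1 h2] := acP x; have [h3 h4] := acP y; have [h5 h6] := acP (x * y).
  apply: hmul => //; rewrite h2 h4 h6; ring.
have [g gE] := @mk_rmorph C R gf g0 gD g1 gM.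
have glift a : gf (pC a) = f a.
  apply: (mulIf t0); rewrite -(gspec (pC a) (a * a0)).
  - by rewrite rmorphM.
  - by rewrite rmorphM /= ha0 mulr0.
  - by rewrite rmorphM.
exists g; split.
- by move=> a; rewrite gE glift.
- move=> g' hg' c; rewrite gE; apply: (mulIf t0).
  have [h1 h2] := acP c.
  by rewrite -gP -hg' h2 rmorphM /t -hg'.
- move=> Q hQ; rewrite -(hf Q hQ); split.
  + move=> H a ha; rewrite -glift -gE; apply: H.
    by rewrite -hcomm ha rmorph0.
  + move=> H c hc; rewrite gE.
    have [a [h1 h2]] := hsurj 0 c (etrans (rmorph0 _) (esym hc)).
    by rewrite -h2 glift; exact: H.
Qed.
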